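(* Let $G$ be a symmetric star topology with compute nodes $V_C$, where $w_v$ is the bandwidth of the edges between compute node $v$ and the center. Let $R,S$ be sets with $|R|<|S|$, $N=|R|+|S|$, initially partitioned among the compute nodes, node $v$ holding $R_v\subseteq R$, $S_v\subseteq S$, $N_v=|R_v|+|S_v|$. Let $V_\alpha=\{v\in V_C:\min\{N_v,N-N_v\}<|R|\}$ and $V_\beta=V_C\setminus V_\alpha$. If $\max_vN_v\le N/2$, then any algorithm computing $R\times S$ has (tuple) cost $\Omega(C)$, where \[C=\min\Big\{\frac{|S|}{\max_vw_v},\ \frac{\sum_{u\in V_\alpha}|S_u|}{2\sum_{u\in V_\beta}w_u},\ \mathcal V\big(R,\textstyle\bigcup_{u\in V_\alpha}S_u,V_\alpha\big)\Big\}.\]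
   Context: Topology-aware model: the network is a directed graph; each edge $e$ has bandwidth $w_e>0$; compute nodes store data and compute, other nodes only route. A symmetric star topology has compute nodes each connected to a single central routing node by an edge in each direction with equal bandwidth. The input is partitioned without duplication; the algorithm knows topology, bandwidths and local fragment sizes. Computation proceeds in synchronous rounds; the tuple cost of a round is $\max_e|Y(e)|/w_e$ with $|Y(e)|$ the number of elements routed through edge $e$; total cost is the sum over rounds. Computing $R\times S$ means every pair $(r,s)\in R\times S$ is emitted by at least one compute node holding both $r$ and $s$. For sets $R',S'$ and a set $U$ of compute nodes, $\mathcal V(R',S',U)$ denotes the smallest $C\ge0$ satisfying $\sum_{v\in U}\min\{C\cdot w_v,|R'|\}\cdot C\cdot w_v\ge|R'|\cdot|S'|$. *)

(* Defs.v *)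
From HB Require Import structures.
From mathcomp Require Import all_boot all_order all_algebra.
From mathcomp Require Import classical_sets reals.
Set Implicit Arguments. Unset Strict Implicit. Unset Printing Implicit Defensive.
Import Order.TTheory GRing.Theory Num.Theory.
Local Open Scope ring_scope.

(* Symmetric star topology: the compute nodes form the finType [V]; every
   compute node [v] is linked to the single central routing node by one edge
   in each direction, both of bandwidth [w v].
   Data elements: elements of R live in finType [A], elements of S in [B];
   an element is of type [A + B] (so R and S are disjoint as elements). *)

Section Model.
Variables (V A B : finType) (RR : realType).

Definition elt := (A + B)%type.

(* One synchronous round: [snd u] = set of elements routed through the
   edge u -> center, [rcv v] = set of elements routed through the edge
   center -> v. *)
Record round := Round { snd : V -> {set elt}; rcv : V -> {set elt} }.

Definition round_ok (K : V -> {set elt}) (r : round) : Prop :=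
  (forall u, snd r u \subset K u) /\
  (forall v, rcv r v \subset \bigcup_(u : V) snd r u).

Definition step (K : V -> {set elt}) (r : round) : V -> {set elt} :=
  fun v => K v :|: rcv r v.

Fixpoint exec_ok (K : V -> {set elt}) (rs : seq round) : Prop :=
  match rs with
  | [::] => True
  | r :: rs' => round_ok K r /\ exec_ok (step K r) rs'
  end.

Fixpoint final (K : V -> {set elt}) (rs : seq round) : V -> {set elt} :=
  match rs with
  | [::] => K
  | r :: rs' => final (step K r) rs'
  end.

Definition round_cost (w : V -> RR) (r : round) : RR :=
  \big[Num.max/0]_(v : V)
     Num.max ((#|snd r v|)%:R / w v) ((#|rcv r v|)%:R / w v).

Definition cost (w : V -> RR) (rs : seq round) : RR :=
  \sum_(r <- rs) round_cost w r.

Definition Rv (Rs : {set A}) (locA : A -> V) (v : V) : {set A} :=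
  [set a in Rs | locA a == v].
Definition Sv (Ss : {set B}) (locB : B -> V) (v : V) : {set B} :=
  [set b in Ss | locB b == v].

Definition init_know (Rs : {set A}) (Ss : {set B}) (locA : A -> V)
  (locB : B -> V) (v : V) : {set elt} :=
  [set x : elt | match x with
                 | inl a => a \in Rv Rs locA v
                 | inr b => b \in Sv Ss locB v end].

(* R x S computed: every pair is held (hence emittable) by some compute node. *)
Definition computes_product (Rs : {set A}) (Ss : {set B})
  (K : V -> {set elt}) : Prop :=
  forall a b, a \in Rs -> b \in Ss ->
    exists v, (inl a \in K v) && (inr b \in K v).

Definition Nv (Rs : {set A}) (Ss : {set B}) (locA : A -> V) (locB : B -> V) (v : V) : nat :=
  #|Rv Rs locA v| + #|Sv Ss locB v|.

(* The quantity  V(R', S', U)  with |R'| = r, |S'| = s. *)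
Definition Vol (w : V -> RR) (r s : nat) (U : {set V}) : RR :=
  inf [set C : RR | 0 <= C /\
         (r * s)%:R <= \sum_(v in U) Num.min (C * w v) r%:R * (C * w v)]%classic.

Definition Valpha (Rs : {set A}) (Ss : {set B}) (locA : A -> V) (locB : B -> V) : {set V} :=
  let N := (#|Rs| + #|Ss|)%N in
  [set v | minn (Nv Rs Ss locA locB v) (N - Nv Rs Ss locA locB v) < #|Rs|]%N.

Definition Vbeta (Rs : {set A}) (Ss : {set B}) (locA : A -> V) (locB : B -> V) : {set V} := ~: Valpha Rs Ss locA locB.

(* The bound C of the theorem.  The middle term is +infinity (hence dropped
   from the minimum) when V_beta is empty. *)
Definition Cbound (w : V -> RR) (Rs : {set A}) (Ss : {set B}) (locA : A -> V) (locB : B -> V) : RR :=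
  let Va := Valpha Rs Ss locA locB in
  let Vb := Vbeta Rs Ss locA locB in
  let SaSize := (\sum_(u in Va) #|Sv Ss locB u|)%N in
  let t1 := (#|Ss|)%:R / \big[Num.max/0]_(v : V) w v in
  let t3 := Vol w #|Rs| SaSize Va in
  if #|Vb| == 0%N then Num.min t1 t3
  else Num.min t1 (Num.min (SaSize%:R / (2 * \sum_(u in Vb) w u)) t3).

End Model.

(* Main.v *)
Require Import Defs.
From HB Require Import structures.
From mathcomp Require Import all_boot all_order all_algebra.
From mathcomp Require Import classical_sets reals.
From mathcomp Require Import ring lra zify.
Import Order.TTheory GRing.Theory Num.Theory.
Local Open Scope ring_scope.

Section Arith.
Variables (R : realFieldType) (V : finType) (al : pred V).
Variables (n m s M Bt : R) (a bA bB rho sA sB X YA YB x : V -> R).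
Hypotheses (H0n : 0 <= n) (Hnm : n < m) (Hs0 : 0 <= s) (Hsm : s <= m).
Hypotheses (Ha0 : forall u, 0 <= a u) (Hsuma : \sum_u a u <= n).
Hypotheses (HbA0 : forall u, 0 <= bA u) (HbB0 : forall u, 0 <= bB u).
Hypotheses (HbAs : \sum_u bA u = s) (HbBs : \sum_u bB u = m - s).
Hypotheses (HbAb : forall u, ~~ al u -> bA u = 0) (HbBa : forall u, al u -> bB u = 0).
Hypotheses (Hal : forall u, al u -> a u + bA u <= n).
Hypotheses (Hrho0 : forall u, 0 <= rho u) (Hrhox : forall u, rho u <= x u) (Hrhon : forall u, rho u <= n).
Hypotheses (HsA0 : forall u, 0 <= sA u) (HsAx : forall u, sA u <= x u) (HsAs : forall u, sA u <= s).
Hypotheses (HsB0 : forall u, 0 <= sB u) (HsBx : forall u, sB u <= x u).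
Hypotheses (HX0 : forall u, 0 <= X u) (HXa : forall u, X u <= a u + rho u) (HXn : forall u, X u <= n).
Hypotheses (HYA0 : forall u, 0 <= YA u) (HYA : forall u, YA u <= bA u + sA u).
Hypotheses (HYB0 : forall u, 0 <= YB u) (HYB : forall u, YB u <= bB u + sB u).
Hypotheses (HcovA : n * s <= \sum_u X u * YA u) (HcovB : n * (m - s) <= \sum_u X u * YB u).
Hypotheses (HM : forall u, x u <= M) (HBt : \sum_(u | ~~ al u) x u <= Bt) (Hx0 : forall u, 0 <= x u).

Let q u := Num.min (x u) n * x u.
Let Q := \sum_(u | al u) q u.
Let Aa := \sum_(u | al u) a u.

Lemma q0 u : 0 <= q u.
Proof. rewrite /q; case: (leP (x u) n) => h; apply: mulr_ge0 => //; lra. Qed.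

Lemma rs_q u y : 0 <= y -> y <= x u -> rho u * y <= q u.
Proof.
move=> y0 yx; rewrite /q; have := Hrho0 u; have := Hrhox u; have := Hrhon u.
case: (leP (x u) n) => h *; nra.
Qed.

Lemma rr_q u : rho u * rho u <= q u.
Proof. exact: rs_q. Qed.

Lemma nsA_q u : n <= sA u -> a u * sA u <= q u.
Proof.
move=> h; rewrite /q; have := HsAx u; have := Ha0 u.
have an : a u <= n.
  apply: le_trans Hsuma; rewrite (bigD1 u) //=; rewrite lerDl.
  by apply: sumr_ge0 => i _.
case: (leP (x u) n) => h2 *; nra.
Qed.

Lemma a_le_n u : a u <= n.
Proof.
apply: le_trans Hsuma; rewrite (bigD1 u) //=; rewrite lerDl.
by apply: sumr_ge0 => i _.
Qed.

Lemma bA_le_s u : bA u <= s.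
Proof.
rewrite -HbAs (bigD1 u) //= lerDl; by apply: sumr_ge0 => i _.
Qed.

Lemma Aa_le_n : Aa <= n.
Proof.
apply: le_trans Hsuma; rewrite (bigID al) /= lerDl.
by apply: sumr_ge0 => i _.
Qed.

Lemma Aa0 : 0 <= Aa.
Proof. by apply: sumr_ge0 => i _. Qed.

Lemma Q0 : 0 <= Q.
Proof. by apply: sumr_ge0 => i _; apply: q0. Qed.

Lemma sumA_al : \sum_(u | al u) bA u = s.
Proof.
rewrite -HbAs (bigID al predT) /= [X in _ = _ + X]big1 ?addr0 // => i /HbAb.
Qed.

Lemma sumB_nal : \sum_(u | ~~ al u) bB u = m - s.
Proof.
rewrite -HbBs (bigID al predT) /= [X in _ = X + _]big1 ?add0r // => i /HbBa.
Qed.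

Lemma betaA : \sum_(u | ~~ al u) X u * YA u <= n * Bt.
Proof.
have -> : n * Bt = \sum_(u | ~~ al u) n * x u + n * (Bt - \sum_(u | ~~ al u) x u).
  by rewrite -mulr_sumr -mulrDr addrC subrK.
apply: le_trans (_ : _ <= \sum_(u | ~~ al u) n * x u) _; last first.
  rewrite lerDl; apply: mulr_ge0 => //; rewrite subr_ge0; exact: HBt.
apply: ler_sum => u hu.
have := HYA u; rewrite HbAb // add0r => h.
have h1 : X u * YA u <= n * YA u by apply: ler_wpM2r => //.
apply: le_trans h1 _; apply: ler_wpM2l => //; apply: le_trans (HsAx u); exact: h.
Qed.


Hypothesis (HM0 : 0 <= M).

Lemma sum_lin (c1 c2 c3 : R) (f g h : V -> R) (P : pred V) :
  \sum_(u | P u) (c1 * f u + c2 * g u + c3 * h u) =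
  c1 * \sum_(u | P u) f u + c2 * \sum_(u | P u) g u + c3 * \sum_(u | P u) h u.
Proof. by rewrite !big_split /= !mulr_sumr. Qed.

Lemma XYA_le u : X u * YA u <= (a u + rho u) * (bA u + sA u).
Proof. apply: ler_pM; [exact: HX0 | exact: HYA0 | exact: HXa | exact: HYA]. Qed.

Lemma bA_le_n u : al u -> bA u <= n.
Proof. move=> h; have := Hal u h; have := Ha0 u; lra. Qed.

Lemma nodeA u : al u ->
  X u * YA u <= (29/32 * n) * bA u + (1/32 * n + M) * a u + 33 * q u.
Proof.
move=> hu; apply: le_trans (XYA_le u) _.
have h1 : a u * bA u <= 7/8 * n * bA u + 1/32 * n * a u.
  have := Hal u hu; have := Ha0 u; have := HbA0 u.
  move=> *; case: (lerP (a u) (7/8 * n)) => h.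
  - nra.
  - have : bA u <= n/8 by lra. nra.
have h2 : a u * sA u <= a u * M.
  apply: ler_wpM2l => //; apply: le_trans (HM u); exact: HsAx.
have h3 : rho u * bA u <= 1/32 * n * bA u + 32 * q u.
  have := rr_q u; have := Hrho0 u; have := HbA0 u; have := @bA_le_n u hu.
  move=> *; case: (lerP (rho u) (n/32)) => h; nra.
have h4 := @rs_q u (sA u) (HsA0 u) (HsAx u).
have -> : (a u + rho u) * (bA u + sA u) =
   a u * bA u + a u * sA u + rho u * bA u + rho u * sA u by ring.
lra.
Qed.

Lemma nodeB u : al u ->
  X u * YA u <= (2 * Num.min n s) * a u + (1/4 * n) * bA u + 6 * q u.
Proof.
move=> hu; apply: le_trans (XYA_le u) _.
have hbn := @bA_le_n u hu; have hbs := bA_le_s u.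
have hmu : 0 <= Num.min n s by rewrite le_min H0n Hs0.
have h1 : a u * bA u <= a u * Num.min n s.
  by apply: ler_wpM2l => //; rewrite le_min hbn hbs.
have h2 : a u * sA u <= q u + a u * Num.min n s.
  case: (lerP n (sA u)) => h.
  - have := @nsA_q u h; have : 0 <= a u * Num.min n s by apply: mulr_ge0.
    lra.
  - have : a u * sA u <= a u * Num.min n s.
      by apply: ler_wpM2l => //; rewrite le_min (ltW h) HsAs.
    have := q0 u; lra.
have h3 : rho u * bA u <= 1/4 * n * bA u + 4 * q u.
  have := rr_q u; have := Hrho0 u; have := HbA0 u.
  move=> *; case: (lerP (rho u) (n/4)) => h; nra.
have h4 := @rs_q u (sA u) (HsA0 u) (HsAx u).
have -> : (a u + rho u) * (bA u + sA u) =
   a u * bA u + a u * sA u + rho u * bA u + rho u * sA u by ring.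
lra.
Qed.

Lemma a_beta u : ~~ al u -> a u <= n - Aa.
Proof.
move=> hu; rewrite lerBrDr; apply: le_trans Hsuma.
rewrite (bigID al predT) /= addrC lerD2r.
rewrite (bigD1 u) //= lerDl; by apply: sumr_ge0 => i _.
Qed.

Lemma x_beta u : ~~ al u -> x u <= Bt.
Proof.
move=> hu; apply: le_trans HBt.
rewrite (bigD1 u) //= lerDl; by apply: sumr_ge0 => i _.
Qed.

Lemma nodeBB u : ~~ al u ->
  X u * YB u <= (n - Aa + Bt) * bB u + n * x u.
Proof.
move=> hu.
have h1 : X u * YB u <= X u * bB u + X u * sB u.
  rewrite -mulrDr; apply: ler_wpM2l => //.
have h2 : X u * sB u <= n * x u.
  apply: ler_pM => //; exact: HsBx.
have h3 : X u <= n - Aa + Bt.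
  apply: le_trans (HXa u) _; apply: lerD; first exact: a_beta.
  apply: le_trans (Hrhox u) _; exact: x_beta.
have h4 : X u * bB u <= (n - Aa + Bt) * bB u by apply: ler_wpM2r.
lra.
Qed.

Lemma nodeBA u : al u -> X u * YB u <= M * a u + q u.
Proof.
move=> hu.
have h0 : YB u <= sB u by have := HYB u; rewrite HbBa // add0r.
have h1 : X u * YB u <= (a u + rho u) * sB u by apply: ler_pM.
have h2 : a u * sB u <= M * a u.
  rewrite mulrC; apply: ler_wpM2r => //; apply: le_trans (HM u); exact: HsBx.
have h3 := @rs_q u (sB u) (HsB0 u) (HsBx u).
move: h1; rewrite mulrDl; lra.
Qed.

Theorem arith_main :
  m <= 192 * M \/ s <= 128 * Bt \/ n * s <= 3168 * Q.
Proof.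
have H0n' := H0n; have Hnm' := Hnm; have Hs0' := Hs0; have Hsm' := Hsm; have HM0' := HM0.
case: (lerP m (192 * M)) => hM; first by left.
case: (lerP s (128 * Bt)) => hB; first by right; left.
case: (lerP (n * s) (3168 * Q)) => hQ; first by right; right.
exfalso.
have Q0' := Q0.
have ns0 : 0 < n * s by lra.
have n0 : 0 < n.
  rewrite lt_neqAle H0n andbT; apply/negP => /eqP n0.
  by move: ns0; rewrite -n0 mul0r ltxx.
have s0 : 0 < s.
  rewrite lt_neqAle Hs0 andbT; apply/negP => /eqP s0.
  by move: ns0; rewrite -s0 mulr0 ltxx.
have HA : n * s <= \sum_(u | al u) X u * YA u + n * Bt.
  apply: le_trans HcovA _; rewrite (bigID al predT) /= lerD2l; exact: betaA.
have nM : n * M <= n * (m / 192) by apply: ler_wpM2l => //; lra.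
have nBt : n * Bt <= n * (s / 128) by apply: ler_wpM2l => //; lra.
have hAa := Aa_le_n; have hAa0 := Aa0.
case: (lerP m (2 * s)) => hms.
-
  have S1 : \sum_(u | al u) X u * YA u <=
      (29/32 * n) * s + (1/32 * n + M) * Aa + 33 * Q.
    rewrite -sumA_al /Aa /Q -sum_lin; apply: ler_sum => u hu; exact: nodeA.
  have h1 : (1/32 * n + M) * Aa <= (1/32 * n + M) * n.
    apply: ler_wpM2l; [idtac | exact: hAa]. lra.
  have nm : n * m <= n * (2 * s) by apply: ler_wpM2l => //; lra.
  have nn : n * n <= n * m by apply: ler_wpM2l => //; lra.
  have : n * s <= (29/32 * n) * s + (1/32 * n + M) * n + 33 * Q + n * Bt by lra.
  rewrite !mulrDl. nra.
-
  set mu := Num.min n s.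
  have hmun : mu <= n by rewrite /mu ge_min lexx.
  have hmus : mu <= s by rewrite /mu ge_min lexx orbT.
  have S1 : \sum_(u | al u) X u * YA u <=
      (2 * mu) * Aa + (1/4 * n) * s + 6 * Q.
    rewrite -sumA_al /Aa /Q -sum_lin; apply: ler_sum => u hu; exact: nodeB.
  case: (lerP (2 * mu * Aa) (n * s / 4)) => hsub.
  + lra.
  + have hAa8 : n / 8 < Aa.
      have : 2 * mu * Aa <= 2 * s * Aa by apply: ler_wpM2r => //; lra.
      move=> h; have : n * s / 4 < 2 * s * Aa by lra.
      move=> h'; rewrite ltNge; apply/negP => hc.
      have : 2 * s * Aa <= 2 * s * (n / 8) by apply: ler_wpM2l => //; lra.
      lra.
    have hs8 : s < 8 * n.
      have : 2 * mu * Aa <= 2 * n * n.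
        have hmu0 : 0 <= mu by rewrite /mu le_min H0n Hs0.
        apply: ler_pM; [lra|exact: hAa0|lra|exact: hAa].
      move=> h; have : n * s / 4 < 2 * n * n by lra.
      move=> h'; rewrite ltNge; apply/negP => hc.
      have : n * (8 * n) <= n * s by apply: ler_wpM2l => //; lra.
      lra.
    have HB2 : n * (m - s) <= (n - Aa + Bt) * (m - s) + n * Bt + M * Aa + Q.
      apply: le_trans HcovB _; rewrite (bigID al predT) /=.
      have SA : \sum_(u | al u) X u * YB u <= M * Aa + Q.
        rewrite /Aa /Q mulr_sumr -big_split /=; apply: ler_sum => u hu.
        exact: nodeBA.
      have SB : \sum_(u | ~~ al u) X u * YB u <= (n - Aa + Bt) * (m - s) + n * Bt.
        apply: le_trans (_ : _ <= \sum_(u | ~~ al u) ((n - Aa + Bt) * bB u + n * x u)) _.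
          apply: ler_sum => u hu; exact: nodeBB.
        rewrite big_split /= -!mulr_sumr sumB_nal lerD2l.
        apply: ler_wpM2l => //.
      lra.
    have ms : 0 <= m - s by lra.
    have h1 : (Aa - Bt) * (m - s) >= (n / 16) * (m - s).
      apply: ler_wpM2r => //; lra.
    have h2 : M * Aa <= (m / 192) * n.
      apply: ler_pM => //; lra.
    have h3 : n * (m - s) >= n * (m / 2) by apply: ler_wpM2l => //; lra.
    have h4 : n * s <= n * m by apply: ler_wpM2l => //; lra.
    nra.
Qed.

End Arith.

Lemma card_fiber (T V : finType) (A : {set T}) (f : T -> V) (P : pred V) :
  (\sum_(u | P u) #|[set t in A | f t == u]| = #|[set t in A | P (f t)]|)%N.
Proof.
rewrite -sum1_card (partition_big f P) /=; last by move=> i; rewrite inE => /andP[].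
apply: eq_bigr => u Pu; rewrite -sum1_card; apply: eq_bigl => t.
rewrite !inE; case: (boolP (f t == u)) => [/eqP -> | _]; rewrite ?Pu ?andbT ?andbF //.
Qed.

Section Exec.
Variables (V A B : finType) (RR : realType).

Lemma final_diff (K : V -> {set elt A B}) (rs : seq (round V A B)) u :
  (#|final K rs u :\: K u| <= \sum_(r <- rs) #|rcv r u|)%N.
Proof.
elim: rs K => [|r rs IH] K /=; first by rewrite finset.setDv cards0.
rewrite big_cons.
apply: leq_trans (_ : _ <= #|(final (step K r) rs u :\: step K r u) :|: rcv r u|)%N _.
  apply: subset_leq_card; apply/fintype.subsetP => x; rewrite !inE => /andP[xK xF].
  by case: (boolP (x \in rcv r u)) => h; rewrite ?h ?xF ?(negbTE xK) ?orbT. 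
apply: leq_trans (leq_card_setU _ _) _.
by rewrite addnC leq_add2l IH.
Qed.

Lemma round_cost_ge0 (w : V -> RR) (r : round V A B) : 0 <= round_cost w r.
Proof. by rewrite /round_cost; apply: bigmax_ge_id. Qed.

Lemma cost_ge0 (w : V -> RR) (rs : seq (round V A B)) : 0 <= cost w rs.
Proof. by rewrite /cost; apply: sumr_ge0 => r _; apply: round_cost_ge0. Qed.

Lemma rcv_le (w : V -> RR) (r : round V A B) u : 0 < w u ->
  (#|rcv r u|)%:R <= w u * round_cost w r.
Proof.
move=> wu.
have h : (#|rcv r u|)%:R / w u <= round_cost w r.
  apply: le_trans (le_bigmax _ _ u); rewrite le_max lexx orbT //.
by rewrite -ler_pdivrMl // mulrC.
Qed.

Lemma recv_budget (w : V -> RR) (K : V -> {set elt A B}) rs u : 0 < w u ->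
  (#|final K rs u :\: K u|)%:R <= cost w rs * w u.
Proof.
move=> wu; apply: le_trans (_ : _ <= (\sum_(r <- rs) #|rcv r u|)%N%:R) _.
  by rewrite ler_nat final_diff.
rewrite natr_sum /cost mulr_suml; apply: ler_sum => r _.
by rewrite mulrC rcv_le.
Qed.
End Exec.

Lemma inI_l (V A B : finType) Rs Ss (locA : A -> V) (locB : B -> V) u r :
  (inl r \in init_know Rs Ss locA locB u) = (r \in Rs) && (locA r == u).
Proof. by rewrite /init_know inE /Rv inE. Qed.

Lemma inI_r (V A B : finType) Rs Ss (locA : A -> V) (locB : B -> V) u y :
  (inr y \in init_know Rs Ss locA locB u) = (y \in Ss) && (locB y == u).
Proof. by rewrite /init_know inE /Sv inE. Qed.

Lemma card_inj_le (T1 T2 : finType) (f : T1 -> T2) (P : {set T1}) (D : {set T2}) :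
  injective f -> (forall t, t \in P -> f t \in D) -> (#|P| <= #|D|)%N.
Proof.
move=> fi h; rewrite -(card_imset P fi); apply: subset_leq_card.
apply/fintype.subsetP => z /imsetP [t tP ->]; exact: h.
Qed.

Section Main.
Variables (RR : realType) (V A B : finType) (w : V -> RR)
         (Rs : {set A}) (Ss : {set B}) (locA : A -> V) (locB : B -> V)
         (rs : seq (round V A B)).
Hypotheses (hw : forall v, 0 < w v) (hnm : (#|Rs| < #|Ss|)%N)
  (hN : forall v, (2 * Nv Rs Ss locA locB v <= #|Rs| + #|Ss|)%N)
  (hcov : computes_product Rs Ss (final (init_know Rs Ss locA locB) rs)).

Let K := final (init_know Rs Ss locA locB) rs.
Let I := init_know Rs Ss locA locB.
Let T := cost w rs.
Let Va := Valpha Rs Ss locA locB.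
Let al : pred V := fun u => u \in Va.
Let Sa := [set y in Ss | locB y \in Va].
Let Sb := [set y in Ss | locB y \notin Va].

Lemma budget u (P : {set elt A B}) : (forall z, z \in P -> (z \in K u) && (z \notin I u)) ->
   (#|P|)%:R <= T * w u.
Proof.
move=> h; apply: le_trans (@recv_budget V A B RR w (init_know Rs Ss locA locB) rs u (hw u)).
rewrite ler_nat; apply: subset_leq_card; apply/fintype.subsetP => z zP.
by rewrite inE andbC; apply: h.
Qed.

Lemma alpha_small u : al u -> (#|Rv Rs locA u| + #|Sv Ss locB u| <= #|Rs|)%N.
Proof.
rewrite /al /Va /Valpha inE => h; have := hN u; move: h; rewrite /Nv; lia.
Qed.

Lemma cover_ineq (S' : {set B}) : S' \subset Ss ->
  (#|Rs| * #|S'| <= \sum_u #|[set r in Rs | inl r \in K u]| * #|[set y in S' | inr y \in K u]|)%N.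
Proof.
move=> sub; rewrite -cardsX.
apply: leq_trans (_ : _ <= #|\bigcup_(u <- index_enum V) finset.setX [set r in Rs | inl r \in K u] [set y in S' | inr y \in K u]|)%N _.
  apply: subset_leq_card; apply/fintype.subsetP => [[r y]].
  rewrite inE /= => /andP[rR yS].
  have [v /andP[h1 h2]] := hcov r y rR (fintype.subsetP sub _ yS).
  apply/finset.bigcupP; exists v; first by [].
  by rewrite inE /= !inE rR yS h1 h2.
apply: leq_trans (unstable.card_big_setU _ _ _) _.
by apply: leq_sum => u _; rewrite cardsX.
Qed.


Lemma budget' (T1 : finType) (f : T1 -> elt A B) (P : {set T1}) u : injective f ->
  (forall t, t \in P -> (f t \in K u) && (f t \notin I u)) -> (#|P|)%:R <= T * w u.
Proof.
move=> fi h; apply: le_trans (@recv_budget V A B RR w (init_know Rs Ss locA locB) rs u (hw u)).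
rewrite ler_nat; apply: card_inj_le fi _ => t tP; rewrite inE andbC; exact: h.
Qed.

Lemma card_fiberT (T1 : finType) (D : {set T1}) (f : T1 -> V) :
  (\sum_u #|[set t in D | f t == u]| = #|D|)%N.
Proof.
have := @card_fiber _ _ D f predT => /= ->.
by apply: eq_card => t; rewrite inE andbT.
Qed.

Lemma T0 : 0 <= T.
Proof. exact: cost_ge0. Qed.

Lemma sub_card (T1 : finType) (P D : {set T1}) : (forall t, t \in P -> t \in D) -> (#|P| <= #|D|)%N.
Proof. by move=> h; apply: subset_leq_card; apply/fintype.subsetP. Qed.

Lemma sub_cardU (T1 : finType) (P D1 D2 : {set T1}) :
  (forall t, t \in P -> (t \in D1) || (t \in D2)) -> (#|P| <= #|D1| + #|D2|)%N.
Proof.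
move=> h; apply: leq_trans (leq_card_setU D1 D2); apply: sub_card => t tP.
by rewrite inE; apply: h.
Qed.

Lemma main_bound : Cbound w Rs Ss locA locB <= 3168 * T.
Proof.
pose n : RR := (#|Rs|)%:R. pose m : RR := (#|Ss|)%:R. pose s : RR := (#|Sa|)%:R.
pose W := \big[Num.max/0]_(v : V) w v.
pose Wb := \sum_(u in Vbeta Rs Ss locA locB) w u.
pose M := T * W. pose Bt := T * Wb.
pose a u : RR := (#|Rv Rs locA u|)%:R.
pose b u : RR := (#|Sv Ss locB u|)%:R.
pose bA u : RR := if al u then b u else 0.
pose bB u : RR := if al u then 0 else b u.
pose rhoS u := [set r in Rs | (inl r \in K u) && (locA r != u)].
pose sAS u := [set y in Sa | (inr y \in K u) && (locB y != u)].
pose sBS u := [set y in Sb | (inr y \in K u) && (locB y != u)].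
pose XS u := [set r in Rs | inl r \in K u].
pose YAS u := [set y in Sa | inr y \in K u].
pose YBS u := [set y in Sb | inr y \in K u].
pose rho u : RR := (#|rhoS u|)%:R.
pose sA u : RR := (#|sAS u|)%:R.
pose sB u : RR := (#|sBS u|)%:R.
pose X u : RR := (#|XS u|)%:R.
pose YA u : RR := (#|YAS u|)%:R.
pose YB u : RR := (#|YBS u|)%:R.
pose x u := T * w u.
have hT0 := T0.
have cardSa : (\sum_(u | al u) #|Sv Ss locB u| = #|Sa|)%N by apply: card_fiber.
have cardSb : (\sum_(u | ~~ al u) #|Sv Ss locB u| = #|Sb|)%N by apply: card_fiber.
have cardS : (#|Sa| + #|Sb| = #|Ss|)%N.
  by rewrite -cardSa -cardSb /Sv -(@card_fiberT _ Ss locB) [RHS](bigID al) /=.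
have SaSs : forall y, y \in Sa -> y \in Ss by move=> y; rewrite inE => /andP[].
have SbSs : forall y, y \in Sb -> y \in Ss by move=> y; rewrite inE => /andP[].
have H0n : 0 <= n by apply: ler0n.
have Hnm : n < m by rewrite ltr_nat.
have Hs0 : 0 <= s by apply: ler0n.
have Hsm : s <= m by rewrite ler_nat; apply: sub_card.
have Ha0 : forall u, 0 <= a u by move=> u; apply: ler0n.
have Hsuma : \sum_u a u <= n by rewrite -natr_sum ler_nat /Rv card_fiberT.
have HbA0 : forall u, 0 <= bA u by move=> u; rewrite /bA; case: (al u) => //; apply: ler0n.
have HbB0 : forall u, 0 <= bB u by move=> u; rewrite /bB; case: (al u) => //; apply: ler0n.
have HbAs : \sum_u bA u = s by rewrite -big_mkcond /= -natr_sum cardSa.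
have HbBs : \sum_u bB u = m - s.
  rewrite /bB (eq_bigr (fun u => if ~~ al u then b u else 0)); last first.
    by move=> u _; case: (al u).
  rewrite -big_mkcond /= -natr_sum cardSb /m /s -cardS natrD; lra.
have HbAb : forall u, ~~ al u -> bA u = 0 by move=> u /negbTE h; rewrite /bA h.
have HbBa : forall u, al u -> bB u = 0 by move=> u h; rewrite /bB h.
have Hal : forall u, al u -> a u + bA u <= n.
  by move=> u h; rewrite /bA h /a /b -natrD ler_nat; apply: alpha_small.
have Hrho0 : forall u, 0 <= rho u by move=> u; apply: ler0n.
have Hrhox : forall u, rho u <= x u.
  move=> u; apply: (@budget' _ inl) => [|r]; first exact: inl_inj.
  by rewrite !inE => /and3P[-> -> /negbTE ->]; rewrite andbF.
have Hrhon : forall u, rho u <= n.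
  by move=> u; rewrite ler_nat; apply: sub_card => r; rewrite inE => /andP[].
have HsA0 : forall u, 0 <= sA u by move=> u; apply: ler0n.
have HsAx : forall u, sA u <= x u.
  move=> u; apply: (@budget' _ inr) => [|y]; first exact: inr_inj.
  by rewrite !inE => /and3P[/andP[-> _] -> /negbTE ->]; rewrite andbF.
have HsAs : forall u, sA u <= s.
  by move=> u; rewrite ler_nat; apply: sub_card => y; rewrite [y \in sAS u]inE => /andP[].
have HsB0 : forall u, 0 <= sB u by move=> u; apply: ler0n.
have HsBx : forall u, sB u <= x u.
  move=> u; apply: (@budget' _ inr) => [|y]; first exact: inr_inj.
  by rewrite !inE => /and3P[/andP[-> _] -> /negbTE ->]; rewrite andbF.
have HX0 : forall u, 0 <= X u by move=> u; apply: ler0n.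
have HXa : forall u, X u <= a u + rho u.
  move=> u; rewrite -natrD ler_nat; apply: sub_cardU => r.
  rewrite !inE => /andP[-> ->] /=; by case: (locA r == u).
have HXn : forall u, X u <= n.
  by move=> u; rewrite ler_nat; apply: sub_card => r; rewrite inE => /andP[].
have HYA0 : forall u, 0 <= YA u by move=> u; apply: ler0n.
have HYA : forall u, YA u <= bA u + sA u.
  move=> u; rewrite /bA; case: (boolP (al u)) => hu.
  - rewrite -natrD ler_nat; apply: sub_cardU => y.
    rewrite [y \in YAS u]inE => /andP[ySa yK].
    rewrite [y \in sAS u]inE [y \in Sv _ _ _]inE ySa yK (SaSs _ ySa) /=.
    by case: (locB y == u).
  - rewrite add0r ler_nat; apply: sub_card => y.
    rewrite [y \in YAS u]inE => /andP[ySa yK].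
    rewrite [y \in sAS u]inE ySa yK /=.
    apply/eqP => e; move: hu; rewrite /al -e.
    by move: ySa; rewrite inE => /andP[_ ->].
have HYB0 : forall u, 0 <= YB u by move=> u; apply: ler0n.
have HYB : forall u, YB u <= bB u + sB u.
  move=> u; rewrite /bB; case: (boolP (al u)) => hu.
  - rewrite add0r ler_nat; apply: sub_card => y.
    rewrite [y \in YBS u]inE => /andP[ySb yK].
    rewrite [y \in sBS u]inE ySb yK /=.
    apply/eqP => e; move: hu; rewrite /al -e.
    by move: ySb; rewrite inE => /andP[_ /negbTE ->].
  - rewrite -natrD ler_nat; apply: sub_cardU => y.
    rewrite [y \in YBS u]inE => /andP[ySb yK].
    rewrite [y \in sBS u]inE [y \in Sv _ _ _]inE ySb yK (SbSs _ ySb) /=.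
    by case: (locB y == u).
have HcovA : n * s <= \sum_u X u * YA u.
  rewrite /n /s -natrM.
  under eq_bigr do rewrite -natrM.
  rewrite -natr_sum ler_nat; apply: cover_ineq.
  by apply/fintype.subsetP.
have HcovB : n * (m - s) <= \sum_u X u * YB u.
  have -> : m - s = (#|Sb|)%:R by rewrite /m /s -cardS natrD; lra.
  rewrite /n -natrM.
  under eq_bigr do rewrite -natrM.
  rewrite -natr_sum ler_nat; apply: cover_ineq.
  by apply/fintype.subsetP.
have W0 : 0 <= W by apply: bigmax_ge_id.
have HM : forall u, x u <= M.
  by move=> u; apply: ler_wpM2l => //; apply: (le_bigmax _ _ u).
have HBt : \sum_(u | ~~ al u) x u <= Bt.
  rewrite /Bt /Wb mulr_sumr le_eqVlt; apply/orP; left; apply/eqP.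
  by apply: eq_bigl => u; rewrite /Vbeta inE.
have Hx0 : forall u, 0 <= x u by move=> u; apply: mulr_ge0 => //; apply: ltW.
have HM0 : 0 <= M by apply: mulr_ge0.
have := @arith_main RR V al n m s M Bt a bA bB rho sA sB X YA YB x H0n Hnm Hs0 Hsm Ha0 Hsuma HbA0 HbB0 HbAs HbBs HbAb HbBa Hal
  Hrho0 Hrhox Hrhon HsA0 HsAx HsAs HsB0 HsBx HX0 HXa HXn HYA0 HYA HYB0 HYB
  HcovA HcovB HM HBt Hx0 HM0.
have SaSize : ((\sum_(u in Va) #|Sv Ss locB u|)%N)%:R = s by rewrite cardSa.
have Vol_ok : n * s <= 3168 * \sum_(u | al u) Num.min (x u) n * x u ->
    Vol w #|Rs| (\sum_(u in Va) #|Sv Ss locB u|)%N Va <= 3168 * T.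
  move=> hQ; rewrite /Vol.
  have lb : has_lbound [set C : RR | 0 <= C /\
         ((#|Rs| * (\sum_(u in Va) #|Sv Ss locB u|))%N)%:R <=
           \sum_(v in Va) Num.min (C * w v) (#|Rs|)%:R * (C * w v)]%classic.
    by exists 0 => C [].
  apply: (ge_inf lb); split; first by apply: mulr_ge0.
  rewrite natrM SaSize; apply: le_trans hQ _.
  rewrite mulr_sumr; apply: ler_sum => u _.
  have xu := Hx0 u.
  have e : 3168 * T * w u = 3168 * x u by rewrite /x mulrA.
  rewrite e -/n.
  have hm : Num.min (x u) n <= Num.min (3168 * x u) n.
    rewrite le_min !ge_min lexx orbT andbT; apply/orP; left; lra.
  have hm0 : 0 <= Num.min (x u) n by rewrite le_min xu H0n.
  have := ler_wpM2r (mulr_ge0 (ler0n _ 3168) xu) hm.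
  rewrite -/(3168 : RR); lra.
have Cb1 : forall z, m / W <= z -> Cbound w Rs Ss locA locB <= z.
  move=> z hz; rewrite /Cbound /=; case: ifP => _; rewrite ge_min hz //.
have Cb3 : forall z, Vol w #|Rs| (\sum_(u in Va) #|Sv Ss locB u|)%N Va <= z ->
    Cbound w Rs Ss locA locB <= z.
  move=> z hz; rewrite /Cbound /=; case: ifP => _; rewrite !ge_min hz ?orbT //.
have Cb2 : forall z, #|Vbeta Rs Ss locA locB| != 0%N -> s / (2 * Wb) <= z ->
    Cbound w Rs Ss locA locB <= z.
  move=> z hV hz; rewrite /Cbound /= (negbTE hV) !ge_min SaSize hz ?orbT //.
have Q0 : 0 <= \sum_(u | al u) Num.min (x u) n * x u.
  apply: sumr_ge0 => u _; apply: mulr_ge0 => //; rewrite le_min Hx0 H0n //.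
case=> [h|[h|h]].
- apply: Cb1.
  have : (0 < #|Ss|)%N by apply: leq_ltn_trans hnm.
  case/card_gt0P => b0 _.
  have Wpos : 0 < W.
    apply: lt_le_trans (hw (locB b0)) _; exact: (le_bigmax _ _ (locB b0)).
  rewrite ler_pdivrMr //; move: h; rewrite /M.
  have : 0 <= T * W by apply: mulr_ge0.
  move=> *; nra.
- case: (boolP (#|Vbeta Rs Ss locA locB| == 0%N)) => hV.
  + apply: Cb3; apply: Vol_ok.
    have Wb0 : Wb = 0.
      rewrite /Wb big_pred0 // => u; move: hV => /eqP/card0_eq ->. by [].
    move: h; rewrite /Bt Wb0 mulr0 mulr0 => h.
    have -> : s = 0 by apply/eqP; rewrite eq_le h Hs0.
    rewrite mulr0; lra.
  + apply: Cb2 => //.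
    have : (0 < #|Vbeta Rs Ss locA locB|)%N by rewrite lt0n.
    case/card_gt0P => u0 hu0.
    have Wbpos : 0 < Wb.
      rewrite /Wb (bigD1 u0) //=; apply: lt_le_trans (hw u0) _.
      rewrite lerDl; apply: sumr_ge0 => i _; exact: ltW.
    rewrite ler_pdivrMr; last by lra.
    move: h; rewrite /Bt; move=> *; nra.
- apply: Cb3; exact: Vol_ok.
Qed.

End Main.

Theorem theorem9 :
  exists c : rat, 0 < c /\
  forall (RR : realType) (V A B : finType) (w : V -> RR)
         (Rs : {set A}) (Ss : {set B}) (locA : A -> V) (locB : B -> V)
         (rs : seq (round V A B)),
    (forall v, 0 < w v) ->
    (#|Rs| < #|Ss|)%N ->
    (forall v, 2 * Nv Rs Ss locA locB v <= #|Rs| + #|Ss|)%N ->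
    exec_ok (init_know Rs Ss locA locB) rs ->
    computes_product Rs Ss (final (init_know Rs Ss locA locB) rs) ->
    ratr c * Cbound w Rs Ss locA locB <= cost w rs.
Proof.
exists (3168%:R)^-1; split; first by rewrite invr_gt0 ltr0n.
move=> RR V A B w Rs Ss locA locB rs hw hnm hN _ hcov.
have := @main_bound RR V A B w Rs Ss locA locB rs hw hnm hN hcov.
rewrite fmorphV rmorph_nat => h.
rewrite ler_pdivrMl ?ltr0n //.
Qed.
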